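(* Let $P$ be a finite nonempty graded poset with rank levels $P_1,\dots,P_d$, and put $L_0=\emptyset$, $L_j=P_1\sqcup\cdots\sqcup P_j$ ($1\le j\le d$). Let $m\ge1$, and identify each lower ideal $I$ of $[m]\times P$ with the tuple $(I_1,\dots,I_m)$, $I_j=\{a\in P:(j,a)\in I\}$ (so $I_m\subseteq\cdots\subseteq I_1$ are lower ideals of $P$). Let $s\ge1$, $n_0\in\mathbb{N}$, $n_1,\dots,n_s\in\mathbb{P}$ with $\sum_{k=0}^s n_k=m$, and $0\le i_s<\cdots<i_1<d$. Then $$\mathfrak{X}_{[m]\times P}(L_d^{n_0},L_{i_1}^{n_1},\dots,L_{i_s}^{n_s})=(L_{i_1+1}^{n_0+1},L_{i_2+1}^{n_1},\dots,L_{i_s+1}^{n_{s-1}},L_0^{n_s-1}),$$ where $L^{r}$ denotes $r$ consecutive copies of $L$.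
   Context: A finite poset is graded if all maximal chains have the same length; then there is a unique rank function $r:P\to\mathbb{P}$ with minimal elements of rank $1$ and $r(x)=r(y)+1$ when $x$ covers $y$; the rank levels are $P_j=r^{-1}(j)$. $[m]=\{1<2<\cdots<m\}$, $[m]\times P$ carries the product order, $\mathbb{N}=\{0,1,\dots\}$, $\mathbb{P}=\{1,2,\dots\}$. For a finite poset $Q$ and a lower ideal $I$, $\mathfrak{X}_Q(I)=\{y\in Q:y\le x\text{ for some }x\in\min(Q\setminus I)\}$. *)

(* Defs.v *)
From HB Require Import structures.
From mathcomp Require Import all_boot all_order.
Set Implicit Arguments. Unset Strict Implicit. Unset Printing Implicit Defensive.
Import Order.Theory.
Local Open Scope order_scope.

Section PosetDefs.
Context {disp : Order.disp_t} (T : finPOrderType disp).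

Definition is_chain (c : seq T) : bool := sorted (fun x y => x < y) c.

Definition maximal_chain (c : seq T) : Prop :=
  is_chain c /\ forall c' : seq T, is_chain c' -> {subset c <= c'} -> {subset c' <= c}.

Definition minimal_elt (x : T) : bool := [forall y : T, ~~ (y < x)].

Definition covers (y x : T) : bool := (x < y) && [forall z : T, ~~ ((x < z) && (z < y))].

Definition is_rank_fun (r : T -> nat) : Prop :=
  (forall x, minimal_elt x -> r x = 1%N) /\
  (forall x y, covers y x -> r y = (r x).+1).

Definition Lset (r : T -> nat) (j : nat) : {set T} := [set a | (r a <= j)%N].

(* the product order on [m] x P, with [m] realized as 'I_m (j <-> j+1) *)
Definition prod_le (m : nat) (p q : 'I_m * T) : bool :=
  ((p.1 : nat) <= q.1)%N && (p.2 <= q.2).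

Definition min_of (m : nat) (S : {set 'I_m * T}) : {set 'I_m * T} :=
  [set x in S | [forall y in S, prod_le y x ==> (y == x)]].

Definition frakX (m : nat) (I : {set 'I_m * T}) : {set 'I_m * T} :=
  [set y | [exists x in min_of (~: I), prod_le y x]].

(* the lower ideal corresponding to a tuple (I_1,...,I_m), given as a list *)
Definition ideal_of_seq (m : nat) (s : seq {set T}) : {set 'I_m * T} :=
  [set p : 'I_m * T | p.2 \in nth set0 s (nat_of_ord p.1)].

Definition expand_blocks (b : seq (nat * {set T})) : seq {set T} :=
  flatten [seq nseq x.1 x.2 | x <- b].

End PosetDefs.

(* Main.v *)
Require Import Defs.
From HB Require Import structures.
From mathcomp Require Import all_boot all_order.
From mathcomp Require Import zify.
Import Order.Theory.
Local Open Scope order_scope.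
Set Implicit Arguments. Unset Strict Implicit.

Section Poset.
Context {disp : Order.disp_t} (T : finPOrderType disp).
Implicit Types x y z : T.

Definition nb (x : T) := #|[set z : T | z < x]|.
Definition na (x : T) := #|[set z : T | x < z]|.

Lemma nb_lt x y : x < y -> (nb x < nb y)%N.
Proof.
move=> xy; apply: proper_card; apply/properP; split.
  apply/subsetP=> z; rewrite !inE => zx; exact: lt_trans zx xy.
by exists x; rewrite !inE ?xy ?ltxx.
Qed.

Lemma na_lt x y : x < y -> (na y < na x)%N.
Proof.
move=> xy; apply: proper_card; apply/properP; split.
  apply/subsetP=> z; rewrite !inE => yz; exact: lt_trans xy yz.
by exists y; rewrite !inE ?xy ?ltxx.
Qed.

Lemma down_cover x y : y < x -> exists2 c, y <= c & covers x c.
Proof.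
move=> yx.
have yA : (y <= y) && (y < x) by rewrite lexx yx.
case: (@arg_maxnP _ y (fun z => (y <= z) && (z < x)) nb yA) => c /andP[yc cx] cmax.
exists c => //; rewrite /covers cx /=.
apply/forallP=> w; apply/negP=> /andP[cw wx].
have := cmax w; rewrite /= (le_trans yc (ltW cw)) wx => /(_ isT).
by rewrite leqNgt nb_lt.
Qed.

Lemma up_cover x y : x < y -> exists2 c, covers c x & c <= y.
Proof.
move=> xy.
have yA : (x < y) && (y <= y) by rewrite lexx xy.
case: (@arg_maxnP _ y (fun z => (x < z) && (z <= y)) na yA) => c /andP[xc cy] cmax.
exists c => //; rewrite /covers xc /=.
apply/forallP=> w; apply/negP=> /andP[xw wc].
have := cmax w; rewrite /= xw (le_trans (ltW wc) cy) => /(_ isT).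
by rewrite leqNgt na_lt.
Qed.

Lemma sorted_cmp (s : seq T) a b : sorted (fun x y => x < y) s ->
  a \in s -> b \in s -> (a <= b) || (b <= a).
Proof.
elim: s => // x s IH /= Hp.
have Hall := order_path_min (@lt_trans _ T) Hp.
have Hs : sorted (fun x y => x < y) s by move: Hp; case: (s) => //= ? ? /andP[].
rewrite !inE => /orP[/eqP-> | ai] /orP[/eqP-> | bi].
- by rewrite lexx.
- by rewrite (ltW (allP Hall _ bi)).
- by rewrite (ltW (allP Hall _ ai)) orbT.
- exact: IH.
Qed.

Variable r : T -> nat.
Hypothesis Hr : is_rank_fun r.

Lemma rank_lt x y : y < x -> (r y < r x)%N.
Proof.
move: {2}(nb x) (leqnn (nb x)) => k; elim: k x y => [|k IH] x y Hk yx.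
  by move: (nb_lt yx) Hk; lia.
case: (down_cover yx) => c yc cx.
rewrite (Hr.2 _ _ cx) ltnS.
case: (eqVneq y c) => [-> //|ync].
have yc' : y < c by rewrite lt_neqAle ync.
apply: ltnW; apply: (IH c) => //.
have := nb_lt (andP cx).1; move: Hk; lia.
Qed.

Lemma rank_le x y : y <= x -> (r y <= r x)%N.
Proof.
rewrite le_eqVlt => /orP[/eqP-> //|/rank_lt]; exact: ltnW.
Qed.

Lemma rank_pos x : (0 < r x)%N.
Proof.
case Hm: (minimal_elt x); first by rewrite (Hr.1 _ Hm).
move/negbT: Hm => /forallPn [y]; rewrite negbK => /rank_lt; lia.
Qed.

Lemma nonmin_cover x : (1 < r x)%N -> exists c, covers x c.
Proof.
case Hm: (minimal_elt x); first by rewrite (Hr.1 _ Hm).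
move/negbT: Hm => /forallPn [y]; rewrite negbK => /down_cover [c _ H] _.
by exists c.
Qed.

Lemma between x0 c w : path (fun a b => covers b a) x0 c ->
  x0 <= w -> w <= last x0 c -> (forall z, z \in c -> (w <= z) || (z <= w)) ->
  w \in x0 :: c.
Proof.
elim: c x0 => [|y c IH] x0 /=.
  by move=> _ H1 H2 _; rewrite inE eq_sym eq_le H1 H2.
move=> /andP[cy pc] x0w wl Hc.
rewrite inE; case: (eqVneq w x0) => //= wx0.
have x0w' : x0 < w by rewrite lt_neqAle eq_sym wx0.
case/orP: (Hc y (mem_head _ _)) => [wy|yw].
  case: (eqVneq w y) => [->|wy']; first by rewrite mem_head.
  have wy2 : w < y by rewrite lt_neqAle wy' wy.
  by move: cy => /andP[_ /forallP /(_ w)]; rewrite x0w' wy2.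
apply: IH => // z zc; apply: Hc; by rewrite inE zc orbT.
Qed.

Lemma down_chain x : exists x0 c, [/\ minimal_elt x0,
  path (fun a b => covers b a) x0 c, last x0 c = x & (size c).+1 = r x].
Proof.
move: {2}(nb x) (leqnn (nb x)) => k; elim: k x => [|k IH] x Hk.
  case Hm: (minimal_elt x); first by exists x, [::]; rewrite (Hr.1 _ Hm).
  move/negbT: Hm => /forallPn [y]; rewrite negbK => /nb_lt; lia.
case Hm: (minimal_elt x); first by exists x, [::]; rewrite (Hr.1 _ Hm).
move/negbT: Hm => /forallPn [y]; rewrite negbK => /down_cover [c _ cx].
have := nb_lt (andP cx).1 => Hc.
case: (IH c) => [|x0 [cc [H1 H2 H3 H4]]]; first by move: Hk; lia.
exists x0, (rcons cc x); split => //.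
- by rewrite rcons_path H2 H3.
- by rewrite last_rcons.
- by rewrite size_rcons H4 (Hr.2 _ _ cx).
Qed.

Variable d : nat.
Hypothesis Hd : forall c : seq T, maximal_chain c -> size c = d.

Lemma rank_max x : [forall z, ~~ (x < z)] -> r x = d.
Proof.
move=> /forallP Hx.
case: (down_chain x) => x0 [c [H1 H2 H3 H4]].
rewrite -H4 -(Hd (c := x0 :: c)) //; split.
  by apply: sub_path H2 => a b /andP[].
move=> c' Hc' Hsub w wc'.
have cmp z : z \in x0 :: c -> (w <= z) || (z <= w).
  by move=> zc; apply: (sorted_cmp Hc') => //; apply: Hsub.
apply: between => //.
- case/orP: (cmp x0 (mem_head _ _)) => // wx0.
  case: (eqVneq w x0) => [->//|ne].
  by move: H1 => /forallP /(_ w); rewrite lt_neqAle ne wx0.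
- have xin : last x0 c \in x0 :: c by apply: mem_last.
  case/orP: (cmp _ xin) => // lw; rewrite H3 in lw *.
  case: (eqVneq w x) => [->//|ne].
  by move: (Hx w); rewrite lt_neqAle eq_sym ne lw.
- by move=> z zc; apply: cmp; rewrite inE zc orbT.
Qed.

Lemma rank_led x : (r x <= d)%N.
Proof.
move: {2}(na x) (leqnn (na x)) => k; elim: k x => [|k IH] x Hk.
  case Hm: [forall z, ~~ (x < z)]; first by rewrite (rank_max Hm).
  move/negbT: Hm => /forallPn [y]; rewrite negbK => /na_lt; lia.
case Hm: [forall z, ~~ (x < z)]; first by rewrite (rank_max Hm).
move/negbT: Hm => /forallPn [y]; rewrite negbK => xy.
have := na_lt xy; have := rank_lt xy; have := IH y; move: Hk; lia.
Qed.

Lemma rank_up a t : (r a <= t <= d)%N -> exists2 b, a <= b & r b = t.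
Proof.
move: {2}(na a) (leqnn (na a)) => k; elim: k a => [|k IH] a Hk Ht.
  case: (eqVneq (r a) t) => [<-|ne]; first by exists a.
  case Hm: [forall z, ~~ (a < z)]; first by move: (rank_max Hm) ne Ht; lia.
  move/negbT: Hm => /forallPn [y]; rewrite negbK => /na_lt; lia.
case: (eqVneq (r a) t) => [<-|ne]; first by exists a.
case Hm: [forall z, ~~ (a < z)]; first by move: (rank_max Hm) ne Ht; lia.
move/negbT: Hm => /forallPn [y]; rewrite negbK => /up_cover [c ca _].
have := na_lt (andP ca).1; have := Hr.2 _ _ ca => Hrc Hn.
case: (IH c) => [||b cb Hb]; [move: Hk Hn; lia | move: Hrc ne Ht; lia|].
by exists b => //; apply: le_trans cb; apply: ltW (andP ca).1.
Qed.

End Poset.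
Lemma sumn_iota (n : nat -> nat) a b : sumn (map n (iota a b)) = (\sum_(a <= l < a + b) n l)%N.
Proof. by rewrite sumnE big_map /index_iota addKn. Qed.

Lemma block_exists (F : nat -> nat) q j : (F 0 <= j < F q)%N ->
  exists k, (k < q)%N /\ (F k <= j < F k.+1)%N.
Proof.
elim: q => [|q IH] /andP[H0 Hq]; first by move: H0 Hq; lia.
case: (ltnP j (F q)) => Hj.
  by case: IH => [|k [H1 H2]]; [rewrite H0 Hj | exists k; split => //; lia].
by exists q; split => //; rewrite Hj Hq.
Qed.

Section Expand.
Context {disp : Order.disp_t} (T : finPOrderType disp).
Lemma nth_expand (b : seq (nat * {set T})) j k : (k < size b)%N ->
  (sumn (take k (unzip1 b)) <= j < sumn (take k.+1 (unzip1 b)))%N ->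
  nth set0 (expand_blocks b) j = (nth (0%N, set0) b k).2.
Proof.
elim: b j k => [|[c L] b IH] j k //= Hk.
rewrite /expand_blocks /= -/(expand_blocks b) nth_cat size_nseq.
case: k Hk => [|k] Hk /=.
  rewrite take0 /= addn0 => Hj.
  by rewrite Hj nth_nseq Hj.
move=> /andP[H1 H2]; have -> : (j < c)%N = false by move: H1; lia.
apply: IH => //; move: H1 H2; lia.
Qed.
End Expand.
Section Main.
Context {disp : Order.disp_t} (T : finPOrderType disp).
Variables (d : nat) (r : T -> nat) (m s : nat) (n i : nat -> nat).
Hypothesis Hd : forall c : seq T, maximal_chain c -> size c = d.
Hypothesis Hr : is_rank_fun r.
Hypothesis Hs : (1 <= s)%N.
Hypothesis Hn : forall k, (1 <= k <= s)%N -> (1 <= n k)%N.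
Hypothesis Hsum : (\sum_(0 <= k < s.+1) n k)%N = m.
Hypothesis Hi : forall k, (1 <= k < s)%N -> (i k.+1 < i k)%N.
Hypothesis Hi1 : (i 1 < d)%N.

Definition N k := (\sum_(0 <= l < k) n l)%N.

Lemma NS k : N k.+1 = (N k + n k)%N.
Proof. by rewrite /N big_nat_recr. Qed.
Lemma N0 : N 0 = 0%N. Proof. by rewrite /N big_geq. Qed.
Lemma Nmono k1 k2 : (k1 <= k2)%N -> (N k1 <= N k2)%N.
Proof.
elim: k2 => [|k IH]; first by rewrite leqn0 => /eqP->.
rewrite leq_eqVlt => /orP[/eqP->//|]; rewrite ltnS => /IH; rewrite NS; lia.
Qed.
Lemma Nm : N s.+1 = m. Proof. exact: Hsum. Qed.
Lemma Nlt k : (1 <= k <= s)%N -> (N k < N k.+1)%N.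
Proof. move=> H; rewrite NS; have := Hn H; lia. Qed.
Lemma N1 k : N k.+1 = (n 0 + \sum_(1 <= l < k.+1) n l)%N.
Proof. by rewrite /N big_ltn. Qed.

Lemma idec k1 k2 : (1 <= k1)%N -> (k1 < k2)%N -> (k2 <= s)%N -> (i k2 < i k1)%N.
Proof.
move=> H1; elim: k2 => // k IH; rewrite ltnS leq_eqVlt => /orP[/eqP<- Hk|Hk Hk2].
  by apply: Hi; lia.
have h1 : (1 <= k < s)%N by lia.
have := Hi h1; have := IH Hk (ltnW Hk2); lia.
Qed.
Lemma idle k1 k2 : (1 <= k1)%N -> (k1 <= k2)%N -> (k2 <= s)%N -> (i k2 <= i k1)%N.
Proof.
move=> H1; rewrite leq_eqVlt => /orP[/eqP->//|H2 H3]; exact: ltnW (idec H1 H2 H3).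
Qed.
Lemma ild k : (1 <= k <= s)%N -> (i k < d)%N.
Proof.
move=> /andP[H1 H2]; have := idle (leqnn 1) H1 H2; lia.
Qed.

Lemma Lrow j k : (k <= s)%N -> (N k <= j < N k.+1)%N ->
  nth set0 (expand_blocks ((n 0, Lset r d) :: [seq (n k, Lset r (i k)) | k <- iota 1 s])) j
  = Lset r (if k == 0%N then d else i k).
Proof.
move=> Hk Hj; rewrite (nth_expand (k := k)); last first.
- have E : unzip1 ((n 0, Lset r d) :: [seq (n k, Lset r (i k)) | k <- iota 1 s])
    = map n (iota 0 s.+1) by rewrite /unzip1 /= -map_comp.
  rewrite E -!map_take !take_iota !sumn_iota /= !add0n.
  rewrite (minn_idPl (_ : k <= s.+1)%N) ?(minn_idPl (_ : k.+1 <= s.+1)%N) //; lia.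
- by rewrite /= size_map size_iota; lia.
case: k Hk Hj => [|k] Hk Hj //=.
by rewrite (nth_map 0%N) ?size_iota // nth_iota.
Qed.

Definition P k := if k == 0%N then 0%N else if (k <= s)%N then (N k + 1)%N else m.

Lemma Rrow j k : (k <= s)%N -> (P k <= j < P k.+1)%N ->
  nth set0 (expand_blocks ((n 0 + 1, Lset r (i 1 + 1))
              :: [seq (n k, Lset r (i k.+1 + 1)) | k <- iota 1 s.-1]
              ++ [:: ((n s).-1, Lset r 0)]))%N j
  = if (k < s)%N then Lset r (i k.+1 + 1) else Lset r 0.
Proof.
set b := (_ :: _).
have Hsz : size b = s.+1 by rewrite /b /= size_cat size_map size_iota /=; lia.
have E : unzip1 b = (n 0 + 1)%N :: map n (iota 1 s.-1) ++ [:: (n s).-1]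
  by rewrite /b /unzip1 /= map_cat -map_comp.
have Pre k' : (k' <= s.+1)%N -> sumn (take k' (unzip1 b)) = P k'.
  rewrite E /P; case: k' => [|k'] //= Hk'.
  case: (leqP k'.+1 s) => Hk2.
    rewrite takel_cat ?size_map ?size_iota; last lia.
    rewrite -map_take take_iota sumn_iota (minn_idPl (_ : k' <= s.-1)%N); last lia.
    by rewrite N1 add1n addnAC.
  have -> : k' = s by lia.
  rewrite take_oversize ?size_cat ?size_map ?size_iota /=; last lia.
  rewrite sumn_cat sumn_iota /= -Nm N1.
  have Hs1 : (1 + s.-1 = s)%N by lia.
  rewrite Hs1 (@big_nat_recr _ _ _ s 1) //.
  set S := \sum_(1 <= _ < s) _; have := Hn (_ : (1 <= s <= s)%N); rewrite Hs leqnn => /(_ isT) Hns; rewrite /=; move: Hns; lia.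
move=> Hk Hj; rewrite (nth_expand (k := k)); last first.
- by rewrite !Pre //; lia.
- by rewrite Hsz.
rewrite /b; case: k Hk Hj => [|k] Hk Hj /=; first by rewrite Hs.
rewrite nth_cat size_map size_iota.
case: (ltnP k s.-1) => H.
  have -> : (k.+1 < s)%N by lia.
  by rewrite (nth_map 0%N) ?size_iota // nth_iota.
have -> : (k.+1 < s)%N = false by lia.
by have -> : (k - s.-1 = 0)%N by lia.
Qed.


Lemma main_eq :
  frakX (ideal_of_seq m (expand_blocks
           ((n 0, Lset r d) :: [seq (n k, Lset r (i k)) | k <- iota 1 s])))
  = ideal_of_seq m (expand_blocks
           ((n 0 + 1, Lset r (i 1 + 1))
              :: [seq (n k, Lset r (i k.+1 + 1)) | k <- iota 1 s.-1]
              ++ [:: ((n s).-1, Lset r 0)]))%N.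
Proof.
set I := ideal_of_seq _ _.
have blk j : (j < m)%N -> exists k, (k <= s)%N /\ (N k <= j < N k.+1)%N.
  move=> Hj; case: (@block_exists N s.+1 j) => [|k [H1 H2]].
    by rewrite N0 Nm.
  by exists k.
have inI (j : 'I_m) b k : (k <= s)%N -> (N k <= j < N k.+1)%N ->
    ((j, b) \in I) = (r b <= if k == 0%N then d else i k)%N.
  by move=> H1 H2; rewrite /I inE /= (Lrow H1 H2) inE.
have blk_le j1 j2 k1 k2 : (N k1 <= j1 < N k1.+1)%N -> (N k2 <= j2 < N k2.+1)%N ->
    (j1 <= j2)%N -> (k1 <= k2)%N.
  move=> /andP[a1 b1] /andP[a2 b2] j12; rewrite leqNgt; apply/negP => H.
  have := Nmono H; lia.
have MIN (x : 'I_m * T) : x \in min_of (~: I) <->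
    exists k, [/\ (1 <= k <= s)%N, (x.1 : nat) = N k & r x.2 = (i k + 1)%N].
  case: x => j b /=; split.
  - rewrite inE => /andP[]; rewrite inE => Hjb /forall_inP Hmin.
    case: (blk j (ltn_ord j)) => k [Hk Hjk].
    move: Hjb; rewrite (inI _ _ _ Hk Hjk) -ltnNge => Hrb.
    have k0 : k != 0%N.
      by apply/eqP => k0; move: Hrb; rewrite k0 /=; have := rank_led Hr Hd b; lia.
    rewrite (negbTE k0) in Hrb.
    have Hj : (j : nat) = N k.
      apply/eqP; rewrite eqn_leq (andP Hjk).1 andbT leqNgt; apply/negP => Hlt.
      have Hj1 : (j.-1 < m)%N by have := ltn_ord j; lia.
      have := Hmin (Ordinal Hj1, b).
      rewrite inE (inI _ _ k Hk) /= ?(negbTE k0); last by move: Hjk Hlt; lia.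
      rewrite leqNgt Hrb /prod_le /= lexx andbT => /(_ isT).
      have -> : (j.-1 <= j)%N by lia.
      by move=> /eqP/(congr1 (fun p => nat_of_ord p.1)) /=; move: Hlt; lia.
    have Hrb2 : r b = (i k + 1)%N.
      apply/eqP; rewrite eqn_leq addn1 Hrb andbT leqNgt; apply/negP => Hgt.
      case: (nonmin_cover Hr (x:=b)) => [|c cb]; first by move: Hgt; lia.
      have Hrc := Hr.2 _ _ cb.
      have := Hmin (j, c).
      rewrite inE (inI _ _ _ Hk Hjk) (negbTE k0) /prod_le /= leqnn (ltW (andP cb).1).
      have -> : (r c <= i k)%N = false by move: Hgt; rewrite Hrc; lia.
      move=> /(_ isT) /eqP [] ceq.
      by move: (andP cb).1; rewrite ceq ltxx.
    by exists k; split => //; move: k0 Hk; lia.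
  - case=> k [Hk Hj Hrb].
    have Hjk : (N k <= j < N k.+1)%N by rewrite Hj leqnn Nlt.
    have Hk' : (k <= s)%N by move: Hk; lia.
    have k0 : (k == 0%N) = false by move: Hk; lia.
    rewrite inE inE (inI _ _ _ Hk' Hjk) k0 Hrb -ltnNge addn1 ltnSn /=.
    apply/forall_inP => -[j2 b2]; rewrite inE /prod_le /= => Hy.
    apply/implyP => /andP[j21 b21].
    case: (blk j2 (ltn_ord j2)) => k2 [Hk2 Hjk2].
    have k21 := blk_le _ _ _ _ Hjk2 Hjk j21.
    move: Hy; rewrite (inI _ _ _ Hk2 Hjk2) -ltnNge => Hy.
    have Hrb2 := rank_le Hr b21.
    have ek : k2 = k.
      apply/eqP; rewrite eqn_leq k21 /= leqNgt; apply/negP => Hlt.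
      move: Hy; case: eqP => [_|/eqP k20].
        by have := ild Hk; move: Hrb2; rewrite Hrb; lia.
      have := @idec k2 k _ Hlt Hk'; move: Hrb2 k20; rewrite Hrb; lia.
    subst k2; rewrite k0 in Hy.
    have ej : (j2 : nat) = j by move: Hjk2 j21; rewrite Hj; lia.
    have eb : b2 = b.
      case: (eqVneq b2 b) => // ne.
      have := rank_lt Hr (_ : b2 < b); rewrite lt_neqAle ne b21 => /(_ isT).
      by move: Hy; rewrite Hrb; lia.
    by rewrite xpair_eqE eb eqxx andbT; apply/eqP; apply: ord_inj.
have X (j : 'I_m) a : ((j, a) \in frakX I) <->
    exists k, [/\ (1 <= k <= s)%N, (j <= N k)%N & (r a <= i k + 1)%N].
  rewrite inE; split.
  - case/exists_inP => -[j1 b] /MIN [k [Hk /= Hj Hrb]] /andP[/= jj ab].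
    exists k; split => //; first by rewrite -Hj.
    by rewrite -Hrb; apply: rank_le.
  - case=> k [Hk Hj Ha].
    have HNk : (N k < m)%N.
      have := Nlt Hk; have := Nmono (_ : (k.+1 <= s.+1)%N); rewrite Nm.
      by move: Hk; rewrite ltnS => /andP[_ ->] /(_ isT); lia.
    have Hd' := ild Hk.
    case: (rank_up Hr Hd (a := a) (t := (i k + 1)%N)) => [|b ab Hb].
      by rewrite Ha /=; lia.
    apply/exists_inP; exists (Ordinal HNk, b).
      by apply/MIN; exists k; split.
    by rewrite /prod_le /= Hj ab.
apply/setP => -[j a].
rewrite [in RHS]inE /=.
case: (@block_exists P s.+1 j) => [|k [Hk Hjk]].
  by rewrite /P /= ltnn ltn_ord.
rewrite ltnS in Hk.
rewrite (Rrow Hk Hjk).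
have HP0 : (k = 0%N /\ P k = 0%N) \/ ((1 <= k <= s)%N /\ P k = (N k + 1)%N).
  rewrite /P; case: k Hk Hjk => [|k] Hk Hjk; [by left | right; by rewrite Hk].
have HP1 : ((k.+1 <= s)%N /\ P k.+1 = (N k.+1 + 1)%N) \/ (k = s /\ P k.+1 = m).
  rewrite /P /=; case: ltnP => H; [by left | right; split => //; lia].
have Hm1 := Nmono Hk.
apply/idP/idP.
- move/X => [k2 [Hk2 Hj2 Ha]].
  have Hk2s : (N k2 <= N s)%N by apply: Nmono; case/andP: Hk2.
  case: ltnP => Hks.
    have Hkk : (k.+1 <= k2)%N.
      rewrite leqNgt; apply/negP; rewrite ltnS => H.
      have := Nmono H; move: H HP0 Hjk Hj2 Hk2; move: (P k) (P k.+1) (N k) (N k2) (nat_of_ord j) => ? ? ? ? ?; lia.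
    rewrite inE; have := @idle k.+1 k2 isT Hkk (andP Hk2).2; move: Ha; lia.
  have ks : k = s by move: Hk Hks; lia.
  subst k; move: HP0 Hjk Hj2 Hk2 Hk2s Hs; lia.
- case: ltnP => Hks.
    rewrite inE => Ha; apply/X; exists k.+1; split.
    + by rewrite Hks.
    + case: HP1 => [[_ E]|[ks _]]; last by move: ks Hks; lia.
      rewrite E in Hjk; move: Hjk; lia.
    + exact: Ha.
  rewrite inE => Ha; exfalso; have := rank_pos Hr a; move: Ha; lia.
Qed.

End Main.

Theorem lemma2p5 (disp : Order.disp_t) (T : finPOrderType disp)
  (d : nat) (r : T -> nat) (m s : nat) (n i : nat -> nat) :
  (0 < #|T|)%N ->
  (forall c : seq T, maximal_chain c -> size c = d) ->
  is_rank_fun r ->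
  (1 <= m)%N -> (1 <= s)%N ->
  (forall k, (1 <= k <= s)%N -> (1 <= n k)%N) ->
  (\sum_(0 <= k < s.+1) n k)%N = m ->
  (forall k, (1 <= k < s)%N -> (i k.+1 < i k)%N) ->
  (i 1 < d)%N ->
  frakX (ideal_of_seq m (expand_blocks
           ((n 0, Lset r d) :: [seq (n k, Lset r (i k)) | k <- iota 1 s])))
  = ideal_of_seq m (expand_blocks
           ((n 0 + 1, Lset r (i 1 + 1))
              :: [seq (n k, Lset r (i k.+1 + 1)) | k <- iota 1 s.-1]
              ++ [:: ((n s).-1, Lset r 0)]))%N.
Proof.
move=> _ Hd Hr _ Hs Hn Hsum Hi Hi1.
exact: (main_eq Hd Hr Hs Hn Hsum Hi Hi1).
Qed.
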